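(* Let $\mathcal{H}=\bigotimes_{i=1}^n\mathbb{C}^{d_i}$, let $|\psi\rangle\in\mathcal{H}$ be a fully entangled pure state, and let $g=g_1\otimes\cdots\otimes g_n$ and $h=h_1\otimes\cdots\otimes h_n$ with $g_i,h_i\in GL(d_i,\mathbb{C})$. Put $G=g^\dagger g$, $H=h^\dagger h$ and $r=\|h|\psi\rangle\|^2/\|g|\psi\rangle\|^2$. Then the state $g|\psi\rangle$ can be transformed into the state $h|\psi\rangle$ via SEP if and only if there exist a finite set of probabilities $p_k\ge 0$ with $\sum_k p_k=1$, symmetries $\{S_k\}_k\subseteq\mathcal{S}_\psi$, and finitely many local matrices $N_q\in\mathcal{N}_{g\psi}$ such that $$\frac{1}{r}\sum_k p_k S_k^\dagger H S_k+g^\dagger\Big(\sum_q N_q^\dagger N_q\Big)g=G.$$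
   Context: A pure state $|\psi\rangle\in\bigotimes_{i=1}^n\mathbb{C}^{d_i}$ is fully entangled if each single-party reduced density matrix $\rho_i$ has rank $d_i$. A CPTP map $\Lambda$ on $\mathcal{B}(\mathcal{H})$ is in SEP if it has a Kraus decomposition $\Lambda(X)=\sum_i K_iXK_i^\dagger$, $\sum_i K_i^\dagger K_i=\mathbb{1}$, with every $K_i=\bigotimes_{j=1}^n K_i^{(j)}$, $K_i^{(j)}\in M(d_j,\mathbb{C})$. A (possibly unnormalized) state $|\alpha\rangle$ can be transformed into $|\beta\rangle$ via a class of maps if some map $\Lambda$ in the class satisfies $\Lambda(|\alpha\rangle\langle\alpha|/\langle\alpha|\alpha\rangle)=|\beta\rangle\langle\beta|/\langle\beta|\beta\rangle$. The stabilizer $\mathcal{S}_\psi$ is the set of operators $S=S^{(1)}\otimes\cdots\otimes S^{(n)}$ with $S^{(i)}\in GL(d_i,\mathbb{C})$ and $S|\psi\rangle=|\psi\rangle$. For a vector $|\chi\rangle$, $\mathcal{N}_{\chi}$ is the set of operators $N=N^{(1)}\otimes\cdots\otimes N^{(n)}$ with $N^{(i)}\in M(d_i,\mathbb{C})$ and $N|\chi\rangle=0$; here $\mathcal{N}_{g\psi}$ refers to $|\chi\rangle=g|\psi\rangle$. *)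

(* Defs.v *)
From mathcomp Require Import all_boot all_algebra.
From mathcomp Require Import complex reals.
Set Implicit Arguments. Unset Strict Implicit. Unset Printing Implicit Defensive.
Import GRing.Theory Num.Theory.
Local Open Scope ring_scope.

Section QI.
Variable R : realType.
Local Notation C := R[i].
Variable n : nat.
Variable d : 'I_n -> nat.

(* Basis of H = (x)_i C^{d_i}: multi-indices x with x i : 'I_(d i). *)
Definition Idx := {dffun forall i : 'I_n, 'I_(d i)}.
(* dim H = #|Idx| = prod_i d_i ; vectors are 'cV_dimH, operators 'M_dimH. *)
Definition dimH := #|{: Idx}|.

Definition adj (m p : nat) (A : 'M[C]_(m, p)) : 'M[C]_(p, m) :=
  (map_mx Num.conj A)^T.

Definition ktensor (K : forall i : 'I_n, 'M[C]_(d i)) : 'M[C]_dimH :=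
  \matrix_(a, b) \prod_(i : 'I_n)
      K i ((enum_val a : Idx) i) ((enum_val b : Idx) i).

Definition nrm2 (v : 'cV[C]_dimH) : C := (adj v *m v) 0 0.

Definition density (v : 'cV[C]_dimH) : 'M[C]_dimH :=
  (nrm2 v)^-1 *: (v *m adj v).

(* single-party reduced density matrix rho_i = Tr_{not i} |psi><psi| *)
Definition rho (psi : 'cV[C]_dimH) (i : 'I_n) : 'M[C]_(d i) :=
  \matrix_(a, b) \sum_(x : Idx | x i == a) \sum_(y : Idx | y i == b)
     (if [forall j : 'I_n, (j != i) ==> (x j == y j)]
      then psi (enum_rank x) 0 * Num.conj (psi (enum_rank y) 0) else 0).

Definition fully_entangled (psi : 'cV[C]_dimH) : Prop :=
  forall i : 'I_n, \rank (rho psi i) = d i.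

(* transformation of (unnormalized) alpha into beta via a SEP map *)
Definition SEP_transform (alpha beta : 'cV[C]_dimH) : Prop :=
  exists (m : nat) (K : 'I_m -> forall i : 'I_n, 'M[C]_(d i)),
    \sum_(k < m) adj (ktensor (K k)) *m ktensor (K k) = 1%:M /\
    \sum_(k < m) ktensor (K k) *m density alpha *m adj (ktensor (K k))
      = density beta.

Definition in_stabilizer (psi : 'cV[C]_dimH) (S : forall i : 'I_n, 'M[C]_(d i))
  : Prop :=
  (forall i, S i \in unitmx) /\ ktensor S *m psi = psi.

Definition in_annihilator (chi : 'cV[C]_dimH) (N : forall i : 'I_n, 'M[C]_(d i))
  : Prop :=
  ktensor N *m chi = 0.

End QI.

(* Main.v *)
Require Import Defs.
From mathcomp Require Import all_boot all_algebra.
From mathcomp Require Import all_order complex reals ring.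
From Stdlib Require Import FunctionalExtensionality.
Set Implicit Arguments. Unset Strict Implicit. Unset Printing Implicit Defensive.
Import Order.TTheory GRing.Theory Num.Theory.
Local Open Scope ring_scope.

Section L.
Variable R : realType.
Local Notation C := R[i].
Variable n : nat.
Variable d : 'I_n -> nat.

Lemma sum_Idx (F : Idx d -> C) :
  \sum_(c < dimH d) F (enum_val c) = \sum_(x : Idx d) F x.
Proof.
rewrite [RHS](reindex (@enum_val _ (mem {: Idx d}))) //.
by exists enum_rank => x; rewrite ?enum_valK ?enum_rankK.
Qed.

Lemma prod_sum_dep (F : forall i : 'I_n, 'I_(d i) -> C) :
  \prod_(i : 'I_n) \sum_(j : 'I_(d i)) F i j = \sum_(x : Idx d) \prod_(i : 'I_n) F i (x i).
Proof.
pose T_ : 'I_n -> finType := fun i => 'I_(d i).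
pose P_ := fun i : 'I_n => [ffun j : T_ i => F i j].
transitivity (\prod_(i : 'I_n) \sum_(j : T_ i) P_ i j).
  by apply: eq_bigr => i _; apply: eq_bigr => j _; rewrite ffunE.
under eq_bigr => i _ do rewrite (big_tag (fun i => P_ i) i).
rewrite bigA_distr_big_dep.
rewrite -(@big_fprod C 0 1 *%R +%R _ T_ P_).
rewrite (reindex (@fprod_of_dffun _ T_)); last first.
  by exists (@dffun_of_fprod _ T_) => x; rewrite ?fprod_of_dffunK ?dffun_of_fprodK.
apply: eq_bigr => x _; apply: eq_bigr => i _.
by rewrite fprodE ffunE.
Qed.

Lemma sum_rank (F : 'I_(dimH d) -> C) :
  \sum_(c < dimH d) F c = \sum_(x : Idx d) F (enum_rank x).
Proof.
rewrite -sum_Idx; apply: eq_bigr => c _; by rewrite enum_valK.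
Qed.

Lemma ktensorM (A B : forall i : 'I_n, 'M[C]_(d i)) :
  ktensor A *m ktensor B = ktensor (fun i => A i *m B i).
Proof.
apply/matrixP => a b; rewrite !mxE.
under [RHS]eq_bigr do rewrite mxE.
rewrite prod_sum_dep -sum_Idx; apply: eq_bigr => c _.
by rewrite !mxE -big_split.
Qed.

Lemma ktensor1 : ktensor (fun i => 1%:M : 'M[C]_(d i)) = 1%:M.
Proof.
apply/matrixP => a b; rewrite !mxE.
have [->|neq] := eqVneq a b.
  by rewrite big1 // => i _; rewrite mxE eqxx.
case: (pickP (fun i => enum_val a i != enum_val b i)) => [i Hi | H].
  by rewrite (bigD1 i) //= mxE (negbTE Hi) mul0r.
case/eqP: neq; apply: enum_val_inj; apply/ffunP => i.
by have := H i => /negbFE/eqP.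
Qed.

Lemma adjE m p (A : 'M[C]_(m, p)) i j : adj A i j = Num.conj (A j i).
Proof. by rewrite /adj !mxE. Qed.

Lemma adj_ktensor (A : forall i : 'I_n, 'M[C]_(d i)) :
  adj (ktensor A) = ktensor (fun i => adj (A i)).
Proof.
apply/matrixP => a b; rewrite adjE !mxE rmorph_prod.
by apply: eq_bigr => i _; rewrite adjE.
Qed.

Lemma ktensor_scale (i0 : 'I_n) (c : C) (A : forall i : 'I_n, 'M[C]_(d i)) :
  ktensor (fun i => if i == i0 then c *: A i else A i) = c *: ktensor A.
Proof.
apply/matrixP => a b; rewrite !mxE (bigD1 i0) //= eqxx mxE.
rewrite [in RHS](bigD1 i0) //= mulrA; congr (_ * _).
by apply: eq_bigr => i /negbTE ->.
Qed.

Lemma ktensorV (A : forall i : 'I_n, 'M[C]_(d i)) :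
  (forall i, A i \in unitmx) ->
  ktensor (fun i => invmx (A i)) *m ktensor A = 1%:M /\
  ktensor A *m ktensor (fun i => invmx (A i)) = 1%:M.
Proof.
move=> U; rewrite !ktensorM -ktensor1; split; congr ktensor;
  apply: functional_extensionality_dep => i; [exact: mulVmx | exact: mulmxV].
Qed.

Lemma ktensor_n0 (A : forall i : 'I_n, 'M[C]_(d i)) :
  (forall i : 'I_n, False) -> ktensor A = 1%:M.
Proof.
move=> F; apply/matrixP => a b; rewrite !mxE.
have -> : a = b.
  by apply: enum_val_inj; apply/ffunP => i; case: (F i).
rewrite eqxx big_pred0 // => i; case: (F i).
Qed.

Lemma fe_unit (psi : 'cV[C]_(dimH d)) (A : forall i : 'I_n, 'M[C]_(d i)) :
  fully_entangled psi -> ktensor A *m psi = psi -> forall i, A i \in unitmx.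
Proof.
move=> FE Apsi i.
have Urho : rho psi i \in unitmx by rewrite -row_free_unit /row_free FE.
rewrite unitmxE unitfE; apply/negP => /det0P [u nz uA].
pose B := fun j : 'I_n => \matrix_(a < d j, b < d j)
  (if j == i then \sum_(c : 'I_(d i) | val c == val b) u 0 c else (a == b)%:R) : 'M[C]_(d j).
have Bi : forall a b, B i a b = u 0 b.
  by move=> a b; rewrite mxE eqxx (big_pred1 b).
have BA0 : ktensor (fun j => B j *m A j) = 0.
  apply/matrixP => a b; rewrite !mxE (bigD1 i) //= mxE.
  have -> : \sum_j B i (enum_val a i) j * A i j (enum_val b i) = (u *m A i) 0 (enum_val b i).
    by rewrite mxE; apply: eq_bigr => j _; rewrite Bi.
  by rewrite uA mxE mul0r.
have Bpsi : ktensor B *m psi = 0 by rewrite -Apsi mulmxA ktensorM BA0 mul0mx.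
have Bprod : forall x y : Idx d, \prod_(j : 'I_n) B j (y j) (x j) =
    u 0 (x i) * ([forall j, (j != i) ==> (x j == y j)])%:R.
  move=> x y; rewrite (bigD1 i) //= Bi; congr (_ * _).
  case: (boolP [forall j, _]) => [/forallP H | /forallPn [j Hj]].
    apply: big1 => j ji; rewrite mxE (negbTE ji).
    by rewrite (eqP (implyP (H j) ji)) eqxx.
  rewrite negb_imply in Hj; case/andP: Hj => ji xy.
  by rewrite (bigD1 j) //= mxE (negbTE ji) eq_sym (negbTE xy) mul0r.
have key : forall y : Idx d, \sum_(x : Idx d) u 0 (x i) *
    ([forall j, (j != i) ==> (x j == y j)])%:R * psi (enum_rank x) 0 = 0.
  move=> y; have := congr1 (fun M : 'cV[C]_(dimH d) => M (enum_rank y) 0) Bpsi.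
  rewrite !mxE sum_rank => E; rewrite -[RHS]E; apply: eq_bigr => x _.
  by rewrite !mxE Bprod !enum_rankK.
have uR : u *m rho psi i = 0.
  apply/matrixP => z b; rewrite (ord1 z) !mxE.
  transitivity (\sum_(x : Idx d) u 0 (x i) *
     \sum_(y : Idx d | y i == b)
       (if [forall j, (j != i) ==> (x j == y j)]
        then psi (enum_rank x) 0 * (psi (enum_rank y) 0)^* else 0)).
    rewrite (partition_big (fun x : Idx d => x i) predT) //=.
    apply: eq_bigr => a _; rewrite mxE big_distrr /=.
    by apply: eq_bigr => x /eqP ->.
  under eq_bigr do rewrite big_distrr.
  rewrite exchange_big /= big1 // => y _.
  transitivity ((psi (enum_rank y) 0)^* * \sum_(x : Idx d) u 0 (x i) *
    ([forall j, (j != i) ==> (x j == y j)])%:R * psi (enum_rank x) 0);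
    last by rewrite key mulr0.
  rewrite big_distrr; apply: eq_bigr => x _.
  case: ifP => _ /=; rewrite ?mulr1 ?mulr0 ?mul0r //.
  by rewrite mulrA mulrC.
  by rewrite mulr0.
have : u = 0 by rewrite -(mulmxK Urho u) uR mul0mx.
by move/eqP; rewrite (negbTE nz).
Qed.
End L.
Section M.
Variable R : realType.
Local Notation C := R[i].

Lemma adjE' m p (A : 'M[C]_(m, p)) i j : adj A i j = (A j i)^*.
Proof. by rewrite /adj !mxE. Qed.

Lemma adjK m p (A : 'M[C]_(m, p)) : adj (adj A) = A.
Proof. by apply/matrixP => i j; rewrite !adjE' conjCK. Qed.

Lemma adjM m p q (A : 'M[C]_(m, p)) (B : 'M[C]_(p, q)) :
  adj (A *m B) = adj B *m adj A.
Proof.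
apply/matrixP => i j; rewrite adjE' !mxE rmorph_sum; apply: eq_bigr => k _.
by rewrite !adjE' rmorphM mulrC.
Qed.

Lemma adjZ m p c (A : 'M[C]_(m, p)) : adj (c *: A) = c^* *: adj A.
Proof. by apply/matrixP => i j; rewrite !(adjE', mxE) rmorphM. Qed.

Lemma adjD m p (A B : 'M[C]_(m, p)) : adj (A + B) = adj A + adj B.
Proof. by apply/matrixP => i j; rewrite !(adjE', mxE) rmorphD. Qed.

Lemma adjN m p (A : 'M[C]_(m, p)) : adj (- A) = - adj A.
Proof. by apply/matrixP => i j; rewrite !(adjE', mxE) rmorphN. Qed.

Lemma adj0 m p : adj (0 : 'M[C]_(m, p)) = 0.
Proof. by apply/matrixP => i j; rewrite !(adjE', mxE) rmorph0. Qed.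

Lemma adj1 m : adj (1%:M : 'M[C]_m) = 1%:M.
Proof. by apply/matrixP => i j; rewrite !(adjE', mxE) eq_sym rmorph_nat. Qed.

Definition ip m (x y : 'cV[C]_m) : C := (adj x *m y) 0 0.

Lemma ipE m (x y : 'cV[C]_m) : ip x y = \sum_i (x i 0)^* * y i 0.
Proof. by rewrite /ip mxE; apply: eq_bigr => i _; rewrite adjE'. Qed.

Lemma ip_ge0 m (x : 'cV[C]_m) : 0 <= ip x x.
Proof. by rewrite ipE sumr_ge0 // => i _; rewrite mulrC mul_conjC_ge0. Qed.

Lemma ip_eq0 m (x : 'cV[C]_m) : ip x x = 0 -> x = 0.
Proof.
rewrite ipE => /psumr_eq0P H; apply/matrixP => i j.
rewrite (ord1 j) mxE; apply/eqP; rewrite -mul_conjC_eq0 mulrC; apply/eqP.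
by apply: H => // k _; rewrite mulrC mul_conjC_ge0.
Qed.

Lemma ip_gt0 m (x : 'cV[C]_m) : x != 0 -> 0 < ip x x.
Proof.
move=> nz; rewrite lt_def ip_ge0 andbT; apply/eqP => /ip_eq0 E.
by rewrite E eqxx in nz.
Qed.

Lemma ip_conj m (x y : 'cV[C]_m) : ip y x = (ip x y)^*.
Proof.
rewrite !ipE rmorph_sum; apply: eq_bigr => i _.
by rewrite rmorphM /= conjCK mulrC.
Qed.

Lemma ipZr m c (x y : 'cV[C]_m) : ip x (c *: y) = c * ip x y.
Proof. by rewrite /ip -scalemxAr mxE. Qed.

Lemma ipZl m c (x y : 'cV[C]_m) : ip (c *: x) y = c^* * ip x y.
Proof. by rewrite /ip adjZ -scalemxAl mxE. Qed.

Lemma ipBr m (x y z : 'cV[C]_m) : ip x (y - z) = ip x y - ip x z.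
Proof. by rewrite /ip mulmxBr mxE mxE mxE. Qed.

Lemma ipBl m (x y z : 'cV[C]_m) : ip (y - z) x = ip y x - ip z x.
Proof. by rewrite /ip adjD adjN mulmxDl mulNmx !mxE. Qed.

Lemma ip_sum m k (x : 'cV[C]_m) (u : 'I_k -> 'cV[C]_m) :
  ip x (\sum_(j < k) u j) = \sum_(j < k) ip x (u j).
Proof. by rewrite /ip mulmx_sumr summxE. Qed.

Lemma outerE m (x y z : 'cV[C]_m) : x *m adj y *m z = ip y z *: x.
Proof.
by rewrite -mulmxA [adj y *m z]mx11_scalar mul_mx_scalar.
Qed.


Lemma rank1 m D (vs : 'I_m -> 'cV[C]_D) (w : 'cV[C]_D) (a : C) :
  0 < a -> w != 0 ->
  \sum_(k < m) a^-1 *: (vs k *m adj (vs k)) = (ip w w)^-1 *: (w *m adj w) ->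
  (forall k, vs k = (ip w (vs k) / ip w w) *: w) /\
  \sum_(k < m) (ip w (vs k) / ip w w)^* * (ip w (vs k) / ip w w) = a / ip w w.
Proof.
move=> a0 w0 E; set b := ip w w.
have b0 : 0 < b by exact: ip_gt0.
have bn0 : b != 0 by rewrite gt_eqF.
have an0 : a != 0 by rewrite gt_eqF.
have Xz : forall z, (\sum_(k < m) a^-1 *: (vs k *m adj (vs k))) *m z
     = \sum_(k < m) (a^-1 * ip (vs k) z) *: vs k.
  move=> z; rewrite mulmx_suml; apply: eq_bigr => k _.
  by rewrite -scalemxAl outerE scalerA.
have ipX : forall z, ip z ((\sum_(k < m) a^-1 *: (vs k *m adj (vs k))) *m z)
     = \sum_(k < m) a^-1 * ((ip z (vs k))^* * ip z (vs k)).
  move=> z; rewrite Xz ip_sum; apply: eq_bigr => k _.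
  by rewrite ipZr ip_conj mulrA.
have part1 : forall k, vs k = (ip w (vs k) / b) *: w.
  move=> k; set g := ip w (vs k) / b; set P := vs k - g *: w.
  have wP : ip w P = 0 by rewrite ipBr ipZr /g divfK // subrr.
  have XP : ip P ((\sum_(k < m) a^-1 *: (vs k *m adj (vs k))) *m P) = 0.
    by rewrite E -scalemxAl outerE wP scale0r scaler0 /ip mulmx0 mxE.
  rewrite ipX in XP.
  have := psumr_eq0P _ XP (i := k) isT.
  have ge0 : forall j : 'I_m, true -> 0 <= a^-1 * ((ip P (vs j))^* * ip P (vs j)).
    move=> j _; rewrite mulr_ge0 //; first by rewrite invr_ge0 ltW.
    by rewrite mulrC mul_conjC_ge0.
  move=> /(_ ge0) /eqP; rewrite mulf_eq0 invr_eq0 (negbTE an0) /= mulrC mul_conjC_eq0.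
  move=> /eqP Pv.
  have : ip P P = 0 by rewrite {2}/P ipBr ipZr Pv ip_conj wP rmorph0 mulr0 subr0.
  by move/ip_eq0/eqP; rewrite subr_eq0 => /eqP.
split=> //.
have bc : b^* = b by rewrite geC0_conj // ltW.
have := congr1 (fun M => ip w (M *m w)) E.
rewrite ipX -scalemxAl outerE scalerA ipZr -/b mulVf // mul1r => F.
have : \sum_(k < m) (ip w (vs k) / b)^* * (ip w (vs k) / b) * (a^-1 * b * b) = b.
  rewrite -[RHS]F; apply: eq_bigr => k _.
  rewrite rmorphM /= fmorphV /= bc; field; exact/andP.
rewrite -big_distrl /= => F2.
have -> : a / b = b / (a^-1 * b * b) by field; exact/andP.
have nz : a^-1 * b * b != 0 by rewrite !mulf_neq0 // invr_eq0.
apply: (mulIf nz); by rewrite F2 divfK.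
Qed.
End M.

Section N.
Variable R : realType.
Local Notation C := R[i].
Variable n : nat.
Variable d : 'I_n -> nat.

Lemma dens_conj (K : 'M[C]_(dimH d)) (v : 'cV[C]_(dimH d)) :
  K *m density v *m adj K = (nrm2 v)^-1 *: ((K *m v) *m adj (K *m v)).
Proof. by rewrite /density -scalemxAr -scalemxAl adjM !mulmxA. Qed.
End N.

Unset Implicit Arguments.
Theorem theorem2 (R : realType) (n : nat) (d : 'I_n -> nat)
  (psi : 'cV[R[i]]_(dimH d)) (gl hl : forall j : 'I_n, 'M[R[i]]_(d j)) :
  (forall j, (0 < d j)%N) ->
  psi != 0 ->
  fully_entangled psi ->
  (forall j, gl j \in unitmx) ->
  (forall j, hl j \in unitmx) ->
  let g := ktensor gl in
  let h := ktensor hl in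
  let G := adj g *m g in
  let H := adj h *m h in
  let r := nrm2 (h *m psi) / nrm2 (g *m psi) in
  SEP_transform (g *m psi) (h *m psi) <->
  exists (m : nat) (p : 'I_m -> R[i]) (S : 'I_m -> forall j : 'I_n, 'M[R[i]]_(d j))
         (l : nat) (N : 'I_l -> forall j : 'I_n, 'M[R[i]]_(d j)),
    (forall k, 0 <= p k) /\ \sum_(k < m) p k = 1 /\
    (forall k, in_stabilizer psi (S k)) /\
    (forall q, in_annihilator (g *m psi) (N q)) /\
    r^-1 *: (\sum_(k < m) p k *: (adj (ktensor (S k)) *m H *m ktensor (S k)))
      + adj g *m (\sum_(q < l) adj (ktensor (N q)) *m ktensor (N q)) *m g = G.
Proof.
move=> dpos psi0 FE gU hU.
intros g h G H r; subst r H G h g.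
have [gig ggi] := ktensorV gU.
have [hih hhi] := ktensorV hU.
set g := ktensor gl; set h := ktensor hl.
set ginv := ktensor (fun j => invmx (gl j)).
set hinv := ktensor (fun j => invmx (hl j)).
have v0 : g *m psi != 0.
  apply: contra psi0 => /eqP E; by rewrite -[psi]mul1mx -gig -mulmxA E mulmx0.
have w0 : h *m psi != 0.
  apply: contra psi0 => /eqP E; by rewrite -[psi]mul1mx -hih -mulmxA E mulmx0.
set v := g *m psi; set w := h *m psi.
have a0 : 0 < nrm2 v := ip_gt0 v0.
have b0 : 0 < nrm2 w := ip_gt0 w0.
have an0 : nrm2 v != 0 by rewrite gt_eqF.
have bn0 : nrm2 w != 0 by rewrite gt_eqF.
case: (posnP n) => [n0 | npos].
  have F : forall i : 'I_n, False by case=> i; rewrite n0.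
  have gE : g = 1%:M by rewrite /g ktensor_n0.
  have hE : h = 1%:M by rewrite /h ktensor_n0.
  have vw : v = w by rewrite /v /w gE hE.
  split.
    move=> _; exists 1%N, (fun _ => 1), (fun _ => gl), 0%N, (fun _ => gl).
    split; first by move=> k; exact: ler01.
    split; first by rewrite big_ord1.
    split; first by move=> k; split; [move=> i; case: (F i) | rewrite ktensor_n0 // mul1mx].
    split; first by case.
    rewrite big_ord0 big_ord1 ktensor_n0 // -vw divff // invr1 !scale1r.
    by rewrite gE hE adj1 !mul1mx mul0mx addr0.
  move=> _; exists 1%N, (fun _ => gl); rewrite !big_ord1 ktensor_n0 //.
  by rewrite adj1 !mul1mx mulmx1 vw.
pose i0 := Ordinal npos.
split.
  case=> m [K [sumK dens]].
  pose Kt k := ktensor (K k).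
  pose vs k := Kt k *m v.
  have E : \sum_(k < m) (nrm2 v)^-1 *: (vs k *m adj (vs k)) = (ip w w)^-1 *: (w *m adj w).
    rewrite -[RHS]/(density w) -dens; apply: eq_bigr => k _; by rewrite dens_conj.
  have [vsE sumg] := rank1 a0 w0 E.
  pose gam k := ip w (vs k) / ip w w.
  have vsE' : forall k, Kt k *m v = gam k *: w := vsE.
  have sumg' : \sum_(k < m) (gam k)^* * gam k = nrm2 v / nrm2 w := sumg.
  pose r := nrm2 w / nrm2 v.
  have r0 : 0 < r by rewrite divr_gt0.
  pose p k := r * ((gam k)^* * gam k).
  pose Sd k : forall j, 'M[R[i]]_(d j) := fun j => invmx (hl j) *m K k j *m gl j.
  pose S k : forall j, 'M[R[i]]_(d j) := if gam k == 0 then (fun j => 1%:M)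
     else (fun j => if j == i0 then (gam k)^-1 *: Sd k j else Sd k j).
  pose N k : forall j, 'M[R[i]]_(d j) := fun j =>
     if j == i0 then (if gam k == 0 then 1 else 0) *: K k j else K k j.
  have SdE k : ktensor (Sd k) = hinv *m Kt k *m g by rewrite /hinv /Kt /g !ktensorM.
  have SE k : gam k != 0 -> ktensor (S k) = (gam k)^-1 *: (hinv *m Kt k *m g).
    by move=> nz; rewrite /S (negbTE nz) ktensor_scale SdE.
  have S1 k : gam k = 0 -> ktensor (S k) = 1%:M.
    by rewrite /S => ->; rewrite eqxx ktensor1.
  have NE k : ktensor (N k) = (if gam k == 0 then 1 else 0) *: Kt k.
    by rewrite /N ktensor_scale.
  exists m, p, S, m, N.
  split.
    move=> k; rewrite /p mulr_ge0 //; first by rewrite ltW.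
    by rewrite mulrC mul_conjC_ge0.
  split.
    rewrite /p -mulr_sumr sumg' /r; field; exact/andP.
  split.
    move=> k; case: (eqVneq (gam k) 0) => [g0 | gn0].
      split; last by rewrite S1 // mul1mx.
      by move=> j; rewrite /S g0 eqxx unitmx1.
    have St : ktensor (S k) *m psi = psi.
      rewrite SE // -scalemxAl -!mulmxA -/v vsE' -scalemxAr /w mulmxA hih mul1mx.
      by rewrite scalerA mulVf // scale1r.
    split=> //; exact: fe_unit FE St.
  split.
    move=> q; rewrite /in_annihilator NE -scalemxAl vsE'.
    by case: eqP => [->|_]; rewrite ?scale0r ?scaler0.
  have term k : r^-1 *: (p k *: (adj (ktensor (S k)) *m (adj h *m h) *m ktensor (S k)))
      + adj g *m (adj (ktensor (N k)) *m ktensor (N k)) *m g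
      = adj g *m (adj (Kt k) *m Kt k) *m g.
    rewrite NE adjZ; case: (eqVneq (gam k) 0) => [g0 | gn0].
      rewrite /p g0 S1 // rmorph0 mul0r mulr0 scale0r scaler0 add0r rmorph1.
      by rewrite !scale1r.
    rewrite rmorph0 scale0r mul0mx mulmx0 mul0mx addr0 SE //.
    set M := hinv *m Kt k *m g.
    have hM : h *m M = Kt k *m g by rewrite /M !mulmxA hhi mul1mx.
    have X : adj M *m (adj h *m h) *m M = adj g *m (adj (Kt k) *m Kt k) *m g.
      transitivity (adj (h *m M) *m (h *m M)); first by rewrite adjM !mulmxA.
      by rewrite hM adjM !mulmxA.
    rewrite adjZ -!scalemxAl -scalemxAr !scalerA X.
    rewrite [X in X *: _](_ : _ = 1) ?scale1r //.
      rewrite /p fmorphV /=.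
      have gc : (gam k)^* != 0 by rewrite conjC_eq0.
      field; rewrite gn0 gc /= gt_eqF //.
  transitivity (\sum_(k < m) adj g *m (adj (Kt k) *m Kt k) *m g).
    rewrite scaler_sumr mulmx_sumr mulmx_suml -big_split; apply: eq_bigr => k _.
    exact: term.
  by rewrite -mulmx_suml -mulmx_sumr sumK mulmx1.
move=> [m [p [S [l [N [p0 [p1 [Sst [Nan E]]]]]]]]].
pose r := nrm2 w / nrm2 v.
have r0 : 0 < r by rewrite divr_gt0.
have rn0 : r != 0 by rewrite gt_eqF.
pose c k := sqrtC (p k / r).
have cc k : (c k)^* * c k = p k / r.
  have ge : 0 <= p k / r by rewrite divr_ge0 // ltW.
  by rewrite geC0_conj ?sqrtC_ge0 // -expr2 sqrtCK.
pose Kk k : forall j, 'M[R[i]]_(d j) := fun j => if j == i0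
   then c k *: (hl j *m S k j *m invmx (gl j)) else hl j *m S k j *m invmx (gl j).
pose Kr (t : 'I_(m + l)) : forall j, 'M[R[i]]_(d j) :=
  match split t with inl k => Kk k | inr q => N q end.
have KL k : ktensor (Kr (lshift l k)) = c k *: (h *m ktensor (S k) *m ginv).
  by rewrite /Kr (unsplitK (inl _ k)) /Kk ktensor_scale /h /ginv !ktensorM.
have KR q : Kr (rshift m q) = N q by rewrite /Kr (unsplitK (inr _ q)).
exists (m + l)%N, Kr; split.
  rewrite big_split_ord /=.
  under eq_bigr do rewrite KL.
  under [X in _ + X]eq_bigr do rewrite KR.
  have I1 : adj ginv *m (adj g *m g) *m ginv = 1%:M.
    transitivity (adj (g *m ginv) *m (g *m ginv)); first by rewrite adjM !mulmxA.
    by rewrite ggi adj1 mul1mx.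
  rewrite -[RHS]I1 -[in RHS]E mulmxDr mulmxDl; congr (_ + _).
    rewrite scaler_sumr mulmx_sumr mulmx_suml; apply: eq_bigr => k _.
    rewrite adjZ -scalemxAl -scalemxAr scalerA cc -?scalemxAr -?scalemxAl -?scalemxAr -?scalemxAl !scalerA.
    by rewrite [p k / r]mulrC !adjM !mulmxA.
  rewrite mulmx_sumr mulmx_suml mulmx_sumr mulmx_suml; apply: eq_bigr => q _.
  rewrite !mulmxA -adjM ggi adj1 mul1mx -!mulmxA ggi mulmx1.
  by [].
rewrite big_split_ord /=.
under eq_bigr do rewrite KL dens_conj.
under [X in _ + X]eq_bigr do rewrite KR dens_conj (Nan _) mul0mx scaler0.
rewrite big1_eq addr0.
have Xv k : (h *m ktensor (S k) *m ginv) *m v = w.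
  by rewrite /v -!mulmxA (mulmxA ginv) gig mul1mx (proj2 (Sst k)).
under eq_bigr do rewrite -scalemxAl Xv adjZ -scalemxAr -scalemxAl scalerA cc scalerA.
rewrite -scaler_suml /density; congr (_ *: _).
rewrite -mulr_sumr -mulr_suml p1 /r; field; exact/andP.
Qed.
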